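(* Let $\mathsf A_1,\dots,\mathsf A_n$ be incompatible observables on a finite-dimensional Hilbert space with $m_1,\dots,m_n$ outcomes respectively. Then $$\chi_{incomp}(\mathsf A_1,\dots,\mathsf A_n)\le\sum_{j=1}^nm_j-n+1.$$
   Context: Observables are POVMs with finitely many outcomes on a $d$-dimensional Hilbert space; $\mathcal S$ is its set of density operators. Observables are compatible if there is a joint observable $\mathsf G$ on the product outcome set whose marginals $\sum_{x_l,l\neq j}\mathsf G(x_1,\dots,x_n)$ equal $\mathsf A_j(x_j)$; otherwise incompatible. For $\mathcal S_0\subset\mathcal S$ they are $\mathcal S_0$-compatible if there are compatible observables $\mathsf A'_j$ (same outcome sets) with $\mathrm{Tr}[\varrho\mathsf A'_j(x)]=\mathrm{Tr}[\varrho\mathsf A_j(x)]$ for all $j,x$ and $\varrho\in\mathcal S_0$; otherwise $\mathcal S_0$-incompatible. $\chi_{incomp}(\mathsf A_1,\dots,\mathsf A_n)=\min\{\dim\mathrm{aff}\mathcal S_0+1:\mathcal S_0\subset\mathcal S,\ \mathsf A_1,\dots,\mathsf A_n\ \mathcal S_0\text{-incompatible}\}$. *)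

(* Defs.v *)
From HB Require Import structures.
From mathcomp Require Import all_boot all_order all_algebra.
From mathcomp Require Import Rstruct complex.
From Stdlib Require Import Reals.

Set Implicit Arguments.
Unset Strict Implicit.
Unset Printing Implicit Defensive.

Import Order.TTheory GRing.Theory Num.Theory.
Local Open Scope ring_scope.

Definition C : numClosedFieldType := Rdefinitions.R[i].

Definition adj_mx (m n : nat) (A : 'M[C]_(m, n)) : 'M[C]_(n, m) :=
  (map_mx (fun z : C => z^*) A)^T.

Definition psd (d : nat) (A : 'M[C]_d) : Prop :=
  adj_mx A = A /\ forall v : 'cV[C]_d, 0 <= (adj_mx v *m A *m v) 0 0.

Definition density (d : nat) (rho : 'M[C]_d) : Prop :=
  psd rho /\ \tr rho = 1.

Definition observable (d m : nat) (A : 'I_m -> 'M[C]_d) : Prop :=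
  (forall x, psd (A x)) /\ \sum_(x < m) A x = 1%:M.

Definition outcomes (n : nat) (m : 'I_n -> nat) :=
  {dffun forall j : 'I_n, 'I_(m j)}.

Definition compatible (d n : nat) (m : 'I_n -> nat)
    (A : forall j : 'I_n, 'I_(m j) -> 'M[C]_d) : Prop :=
  exists G : outcomes m -> 'M[C]_d,
    (forall x, psd (G x)) /\ \sum_(x : outcomes m) G x = 1%:M /\
    forall (j : 'I_n) (k : 'I_(m j)),
      \sum_(x : outcomes m | x j == k) G x = A j k.

Definition S0_compatible (d n : nat) (m : 'I_n -> nat)
    (S0 : 'M[C]_d -> Prop) (A : forall j : 'I_n, 'I_(m j) -> 'M[C]_d) : Prop :=
  exists A' : forall j : 'I_n, 'I_(m j) -> 'M[C]_d,
    (forall j, observable (A' j)) /\ compatible A' /\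
    forall (j : 'I_n) (x : 'I_(m j)) (rho : 'M[C]_d), S0 rho ->
      \tr (rho *m A' j x) = \tr (rho *m A j x).

(* [span_dim V k]: the linear span of the set V of vectors (a subspace of
   'rV_N, represented as a square matrix up to row-space equality) has
   dimension k; U is the smallest subspace containing V. *)
Definition span_dim (N : nat) (V : 'rV[C]_N -> Prop) (k : nat) : Prop :=
  exists U : 'M[C]_N,
    \rank U = k /\ (forall v, V v -> (v <= U)%MS) /\
    forall U' : 'M[C]_N, (forall v, V v -> (v <= U')%MS) -> (U <= U')%MS.

(* dimension of the affine hull of a nonempty set S0 of operators:
   the dimension of the span of {rho - rho0 : rho in S0}, rho0 in S0. *)
Definition affdim (d : nat) (S0 : 'M[C]_d -> Prop) (k : nat) : Prop :=
  exists rho0, S0 rho0 /\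
    span_dim (fun v : 'rV[C]_(d * d) =>
                exists rho, S0 rho /\ v = mxvec (rho - rho0)) k.

(* c is an admissible value in the set whose minimum is chi_incomp *)
Definition chi_candidate (d n : nat) (m : 'I_n -> nat)
    (A : forall j : 'I_n, 'I_(m j) -> 'M[C]_d) (c : nat) : Prop :=
  exists (S0 : 'M[C]_d -> Prop) (k : nat),
    (forall rho, S0 rho -> density rho) /\ ~ S0_compatible S0 A /\
    affdim S0 k /\ c = k.+1.

Definition is_chi_incomp (d n : nat) (m : 'I_n -> nat)
    (A : forall j : 'I_n, 'I_(m j) -> 'M[C]_d) (c : nat) : Prop :=
  chi_candidate A c /\ forall c', chi_candidate A c' -> leq c c'.

(* Main.v *)
Require Import Defs.
From HB Require Import structures.
From mathcomp Require Import all_boot all_order all_algebra.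
From mathcomp Require Import Rstruct complex.
From mathcomp Require Import reals ring lra.
From mathcomp Require Import boolp classical_sets functions topology normedtype derive matrix_normedtype.
From mathcomp Require Import zify.
Set Implicit Arguments.
Unset Strict Implicit.
Unset Printing Implicit Defensive.
Import Order.TTheory GRing.Theory Num.Theory.
Import numFieldNormedType.Exports.
Local Open Scope ring_scope.

Definition RR : realType := Rdefinitions.R.
Definition re (z : C) : RR := complex.Re z.
Definition im (z : C) : RR := complex.Im z.

Lemma conjE (z : C) : z^* = Complex (re z) (- im z).
Proof. by case: z. Qed.
Lemma reD (x y : C) : re (x + y) = re x + re y. Proof. by case: x; case: y. Qed.
Lemma imD (x y : C) : im (x + y) = im x + im y. Proof. by case: x; case: y. Qed.
Lemma reN (x : C) : re (- x) = - re x. Proof. by case: x. Qed.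
Lemma imN (x : C) : im (- x) = - im x. Proof. by case: x. Qed.
Lemma reB (x y : C) : re (x - y) = re x - re y. Proof. by rewrite reD reN. Qed.
Lemma imB (x y : C) : im (x - y) = im x - im y. Proof. by rewrite imD imN. Qed.
Lemma re0 : re 0 = 0. Proof. by []. Qed.
Lemma im0 : im 0 = 0. Proof. by []. Qed.
Lemma reM (x y : C) : re (x * y) = re x * re y - im x * im y.
Proof. by case: x; case: y. Qed.
Lemma imM (x y : C) : im (x * y) = re x * im y + im x * re y.
Proof. by case: x => a b; case: y => c e /=; rewrite /im /=; lra. Qed.
Lemma re_conj (x : C) : re x^* = re x. Proof. by case: x. Qed.
Lemma im_conj (x : C) : im x^* = - im x. Proof. by case: x. Qed.
Lemma re_sum (I : Type) (r : seq I) (P : pred I) (F : I -> C) :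
  re (\sum_(i <- r | P i) F i) = \sum_(i <- r | P i) re (F i).
Proof. by elim/big_rec2: _ => // i a b _ <-; rewrite reD. Qed.
Lemma im_sum (I : Type) (r : seq I) (P : pred I) (F : I -> C) :
  im (\sum_(i <- r | P i) F i) = \sum_(i <- r | P i) im (F i).
Proof. by elim/big_rec2: _ => // i a b _ <-; rewrite imD. Qed.
Lemma ge0C (z : C) : (0 <= z) = (im z == 0) && (0 <= re z).
Proof. by rewrite lecE. Qed.
Lemma eqCri (x y : C) : x = y <-> re x = re y /\ im x = im y.
Proof. by case: x; case: y => a b c e /=; split; [case=> -> ->|case=> -> ->]. Qed.
Lemma reRC (r : RR) (z : C) : re (Complex r 0 * z) = r * re z.
Proof. by case: z => a b; rewrite reM /re /im /=; lra. Qed.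
Lemma imRC (r : RR) (z : C) : im (Complex r 0 * z) = r * im z.
Proof. by case: z => a b; rewrite imM /re /im /=; lra. Qed.

Section Adj.
Variable d : nat.
Implicit Types A B : 'M[C]_d.

Lemma adj_mxD (p q : nat) (A B : 'M[C]_(p, q)) : adj_mx (A + B) = adj_mx A + adj_mx B.
Proof. by apply/matrixP => i j; rewrite !mxE rmorphD. Qed.
Lemma adj_mxN (p q : nat) (A : 'M[C]_(p, q)) : adj_mx (- A) = - adj_mx A.
Proof. by apply/matrixP => i j; rewrite !mxE rmorphN. Qed.
Lemma adj_mxB (p q : nat) (A B : 'M[C]_(p, q)) : adj_mx (A - B) = adj_mx A - adj_mx B.
Proof. by rewrite adj_mxD adj_mxN. Qed.
Lemma adj_mxZ (p q : nat) c (A : 'M[C]_(p, q)) : adj_mx (c *: A) = c^* *: adj_mx A.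
Proof. by apply/matrixP => i j; rewrite !mxE rmorphM. Qed.
Lemma adj_mx0 (p q : nat) : adj_mx (0 : 'M[C]_(p, q)) = 0.
Proof. by apply/matrixP => i j; rewrite !mxE rmorph0. Qed.
Lemma adj_mx_sum (I : Type) (r : seq I) (P : pred I) (F : I -> 'M[C]_d) :
  adj_mx (\sum_(i <- r | P i) F i) = \sum_(i <- r | P i) adj_mx (F i).
Proof. by elim/big_rec2: _ => [|i a b _ <-]; rewrite ?adj_mx0 // adj_mxD. Qed.
Lemma adj_mx1 : adj_mx (1%:M : 'M[C]_d) = 1%:M.
Proof. by apply/matrixP => i j; rewrite !mxE rmorph_nat eq_sym. Qed.
Lemma adj_mxM (p q r : nat) (A : 'M[C]_(p, q)) (B : 'M[C]_(q, r)) :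
  adj_mx (A *m B) = adj_mx B *m adj_mx A.
Proof.
apply/matrixP => i j; rewrite !mxE rmorph_sum; apply: eq_bigr => k _.
by rewrite !mxE rmorphM mulrC.
Qed.
Lemma adj_delta (p q : nat) (a : 'I_p) (b : 'I_q) :
  adj_mx (delta_mx a b : 'M[C]_(p, q)) = delta_mx b a.
Proof. by apply/matrixP => i j; rewrite !mxE rmorph_nat andbC. Qed.
End Adj.

Definition bf (d : nat) (v w : 'cV[C]_d) (A : 'M[C]_d) : C := (adj_mx v *m A *m w) 0 0.

Lemma bf_delta (d : nat) (a b : 'I_d) (A : 'M[C]_d) :
  bf (delta_mx a 0) (delta_mx b 0) A = A a b.
Proof. by rewrite /bf adj_delta -rowE -colE !mxE. Qed.

Lemma bfDl d v v' w (A : 'M[C]_d) : bf (v + v') w A = bf v w A + bf v' w A.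
Proof. by rewrite /bf adj_mxD !mulmxDl mxE. Qed.
Lemma bfDr d v w w' (A : 'M[C]_d) : bf v (w + w') A = bf v w A + bf v w' A.
Proof. by rewrite /bf mulmxDr mxE. Qed.
Lemma bfZl d c v w (A : 'M[C]_d) : bf (c *: v) w A = c^* * bf v w A.
Proof. by rewrite /bf adj_mxZ -!scalemxAl mxE. Qed.
Lemma bfZr d c v w (A : 'M[C]_d) : bf v (c *: w) A = c * bf v w A.
Proof. by rewrite /bf -scalemxAr mxE. Qed.
Lemma bfDm d v w (A B : 'M[C]_d) : bf v w (A + B) = bf v w A + bf v w B.
Proof. by rewrite /bf mulmxDr mulmxDl mxE. Qed.
Lemma bfZm d c v w (A : 'M[C]_d) : bf v w (c *: A) = c * bf v w A.
Proof. by rewrite /bf -scalemxAr -scalemxAl mxE. Qed.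
Lemma bfNm d v w (A : 'M[C]_d) : bf v w (- A) = - bf v w A.
Proof. by rewrite -scaleN1r bfZm mulN1r. Qed.
Lemma bf0m d v w : bf v w (0 : 'M[C]_d) = 0.
Proof. by rewrite /bf mulmx0 mul0mx mxE. Qed.
Lemma bf_sum d v w (I : Type) (r : seq I) (P : pred I) (F : I -> 'M[C]_d) :
  bf v w (\sum_(i <- r | P i) F i) = \sum_(i <- r | P i) bf v w (F i).
Proof. by elim/big_rec2: _ => [|i a b _ <-]; rewrite ?bf0m // bfDm. Qed.
Lemma bf1 d (v : 'cV[C]_d) : 0 <= bf v v 1%:M.
Proof.
rewrite /bf mulmx1 mxE; apply: sumr_ge0 => i _; rewrite !mxE mulrC.
exact: mul_conjC_ge0.
Qed.

Lemma psd_herm d (A : 'M[C]_d) : psd A -> adj_mx A = A. Proof. by case. Qed.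
Lemma psd_ge0 d (A : 'M[C]_d) v : psd A -> 0 <= bf v v A. Proof. by case=> _; apply. Qed.
Lemma psd0 d : psd (0 : 'M[C]_d).
Proof. by split; [rewrite adj_mx0|move=> v; rewrite -/(bf _ _ _) bf0m]. Qed.
Lemma psd1 d : psd (1%:M : 'M[C]_d).
Proof. by split; [rewrite adj_mx1|move=> v; exact: bf1]. Qed.
Lemma psdD d (A B : 'M[C]_d) : psd A -> psd B -> psd (A + B).
Proof.
move=> hA hB; split; first by rewrite adj_mxD !psd_herm.
by move=> v; rewrite -/(bf _ _ _) bfDm addr_ge0 //; apply: psd_ge0.
Qed.
Lemma psd_sum d (I : Type) (r : seq I) (P : pred I) (F : I -> 'M[C]_d) :
  (forall i, P i -> psd (F i)) -> psd (\sum_(i <- r | P i) F i).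
Proof. by move=> h; elim/big_rec: _ => [|i x Pi hx]; [exact: psd0|apply: psdD => //; exact: h]. Qed.
Lemma psdZ d c (A : 'M[C]_d) : 0 <= c -> psd A -> psd (c *: A).
Proof.
move=> c0 hA; split.
  have cr : c \is Num.real by exact: ger0_real.
  by rewrite adj_mxZ psd_herm // conj_Creal.
by move=> v; rewrite -/(bf _ _ _) bfZm mulr_ge0 //; apply: psd_ge0.
Qed.
Lemma tr_psd_ge0 d (A : 'M[C]_d) : psd A -> 0 <= \tr A.
Proof.
move=> hA; rewrite /mxtrace; apply: sumr_ge0 => i _.
by rewrite -bf_delta; apply: psd_ge0.
Qed.

Definition hs (d : nat) (X Y : 'M[C]_d) : RR :=
  \sum_a \sum_b (re (X a b) * re (Y a b) + im (X a b) * im (Y a b)).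

Lemma hsC d (X Y : 'M[C]_d) : hs X Y = hs Y X.
Proof. by apply: eq_bigr => a _; apply: eq_bigr => b _; rewrite mulrC [im _ * _]mulrC. Qed.
Lemma hsDr d (X Y Z : 'M[C]_d) : hs X (Y + Z) = hs X Y + hs X Z.
Proof.
rewrite /hs -big_split; apply: eq_bigr => a _; rewrite -big_split /=.
by apply: eq_bigr => b _; rewrite mxE reD imD /=; ring.
Qed.
Lemma hsNr d (X Y : 'M[C]_d) : hs X (- Y) = - hs X Y.
Proof.
rewrite /hs -sumrN; apply: eq_bigr => a _; rewrite -sumrN.
by apply: eq_bigr => b _; rewrite mxE reN imN; ring.
Qed.
Lemma hsBr d (X Y Z : 'M[C]_d) : hs X (Y - Z) = hs X Y - hs X Z.
Proof. by rewrite hsDr hsNr. Qed.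
Lemma hsDl d (X Y Z : 'M[C]_d) : hs (Y + Z) X = hs Y X + hs Z X.
Proof. by rewrite !(hsC _ X) hsDr. Qed.
Lemma hsBl d (X Y Z : 'M[C]_d) : hs (Y - Z) X = hs Y X - hs Z X.
Proof. by rewrite !(hsC _ X) hsBr. Qed.
Lemma hsZr d (X Y : 'M[C]_d) (t : RR) : hs X (Complex t 0 *: Y) = t * hs X Y.
Proof.
rewrite /hs mulr_sumr; apply: eq_bigr => a _; rewrite mulr_sumr.
by apply: eq_bigr => b _; rewrite mxE reRC imRC; ring.
Qed.
Lemma hsZl d (X Y : 'M[C]_d) (t : RR) : hs (Complex t 0 *: Y) X = t * hs Y X.
Proof. by rewrite !(hsC _ X) hsZr. Qed.

Lemma hsn_ge0 d (X : 'M[C]_d) : 0 <= hs X X.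
Proof.
apply: sumr_ge0 => a _; apply: sumr_ge0 => b _.
by nra.
Qed.

Lemma hsn_eq0 d (X : 'M[C]_d) : hs X X = 0 -> X = 0.
Proof.
move=> /eqP; rewrite psumr_eq0 => [/allP H|a _]; last first.
  by apply: sumr_ge0 => b _; nra.
apply/matrixP => a b; rewrite mxE.
have /(_ (mem_index_enum a)) := H a; rewrite /= psumr_eq0 => [/allP H2|]; last first.
  by move=> c _; nra.
have /(_ (mem_index_enum b)) := H2 b => /= /eqP h.
by apply eqCri; rewrite re0 im0; split; nra.
Qed.

Lemma hs_tr d (X Y : 'M[C]_d) : hs X Y = re (\tr (adj_mx X *m Y)).
Proof.
rewrite /hs /mxtrace re_sum exchange_big; apply: eq_bigr => b _.
rewrite mxE re_sum; apply: eq_bigr => a _.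
by rewrite !mxE reM re_conj im_conj; ring.
Qed.

Lemma hsn_expand d (F D : 'M[C]_d) (t : RR) :
  hs (F - Complex t 0 *: D) (F - Complex t 0 *: D) =
  hs F F - 2 * t * hs F D + t ^+ 2 * hs D D.
Proof.
rewrite hsBl !hsBr hsZl hsZr hsZl hsZr (hsC D F); ring.
Qed.

Lemma bfE2 d (a b : 'I_d) (u : C) (M : 'M[C]_d) :
  bf (delta_mx a 0 + u *: delta_mx b 0) (delta_mx a 0 + u *: delta_mx b 0) M =
  M a a + u * M a b + u^* * M b a + u^* * u * M b b.
Proof.
rewrite !bfDl !bfDr !bfZl !bfZr !bf_delta; rewrite mulrA; ring.
Qed.

Lemma psd_box d (M : 'M[C]_d) : psd M -> psd (1%:M - M) ->
  forall a b, (-1 <= re (M a b) <= 1) /\ (-1 <= im (M a b) <= 1).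
Proof.
move=> hM hN.
have diag a : im (M a a) = 0 /\ 0 <= re (M a a) <= 1.
  have := psd_ge0 (delta_mx a 0) hM; rewrite bf_delta ge0C => /andP[/eqP -> h1].
  have := psd_ge0 (delta_mx a 0) hN; rewrite bf_delta ge0C !mxE eqxx => /andP[_].
  rewrite reB /= => h2; split => //; apply/andP; split => //.
  by move: h2; rewrite /re /=; lra.
have herm a b : M b a = (M a b)^*.
  by have := congr1 (fun X : 'M[C]_d => X b a) (psd_herm hM); rewrite !mxE => <-.
move=> a b; case: (eqVneq a b) => [<-|ab].
  have [h1 /andP[h2 h3]] := diag a; rewrite h1; split; apply/andP; split; lra.
have key u : 0 <= re (M a a) + re (u * M a b) + re (u^* * (M a b)^*) + re (u^* * u * M b b).
  have := psd_ge0 (delta_mx a 0 + u *: delta_mx b 0) hM.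
  by rewrite bfE2 (herm a b) ge0C => /andP[_]; rewrite !reD.
have [ia /andP[ra1 ra2]] := diag a; have [ib /andP[rb1 rb2]] := diag b.
have k1 := key (Complex 1 0); have k2 := key (Complex (-1) 0).
have k3 := key (Complex 0 1); have k4 := key (Complex 0 (-1)).
move: k1 k2 k3 k4; rewrite !reM !imM !re_conj !im_conj ib.
rewrite /re /im /= => k1 k2 k3 k4.
split; apply/andP; split; lra.
Qed.

Local Open Scope classical_set_scope.

Section Cont.
Variable N : nat.
Implicit Types (u v : 'rV[RR]_N).

Lemma cont_sum (I : Type) (r : seq I) (P : pred I) (g : I -> 'rV[RR]_N -> RR) :
  (forall i, continuous (g i)) -> continuous (fun v => \sum_(i <- r | P i) g i v).
Proof.
move=> h; elim: r => [|i r IH].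
  by under eq_fun do rewrite big_nil; exact: cst_continuous.
under eq_fun do rewrite big_cons.
case: (P i) => //.
by move=> x; apply: continuousD; [exact: h|exact: IH].
Qed.

Lemma cont_sub (f g : 'rV[RR]_N -> RR) : continuous f -> continuous g ->
  continuous (fun v => f v - g v).
Proof. move=> hf hg x; apply: continuousB; [exact: hf|exact: hg]. Qed.
Lemma cont_add (f g : 'rV[RR]_N -> RR) : continuous f -> continuous g ->
  continuous (fun v => f v + g v).
Proof. move=> hf hg x; apply: continuousD; [exact: hf|exact: hg]. Qed.
Lemma cont_mul (f g : 'rV[RR]_N -> RR) : continuous f -> continuous g ->
  continuous (fun v => f v * g v).
Proof. move=> hf hg x; apply: continuousM; [exact: hf|exact: hg]. Qed.
Lemma cont_cst (c : RR) : continuous (fun v : 'rV[RR]_N => c).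
Proof. move=> x; exact: cst_continuous. Qed.

Definition linR (phi : 'rV[RR]_N -> RR) :=
  (forall u v, phi (u + v) = phi u + phi v) /\ (forall r v, phi (r *: v) = r * phi v).

Lemma linR_cont phi : linR phi -> continuous phi.
Proof.
move=> [hD hZ].
have h0 : phi 0 = 0 by rewrite -(scale0r 0) hZ mul0r.
have -> : phi = (fun v => \sum_(k < N) v 0 k * phi (delta_mx 0 k)).
  apply: funext => v; rewrite {1}(row_sum_delta v).
  elim/big_rec2: _ => [|k x y _ <-]; first exact: h0.
  by rewrite hD hZ.
apply: cont_sum => k; move=> x; apply: continuousM; last exact: cst_continuous.
exact: coord_continuous.
Qed.
End Cont.

Section Enc.
Variables (T : finType) (d : nat).
Definition idx := (T * 'I_d * 'I_d * bool)%type.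
Local Notation N := #|{: idx}|.
Definition ix (x : T) (a b : 'I_d) (s : bool) : 'I_N := enum_rank ((x, a, b, s) : idx).
Definition dec (v : 'rV[RR]_N) (x : T) : 'M[C]_d :=
  \matrix_(a, b) (Complex (v 0 (ix x a b false)) (v 0 (ix x a b true)) : C).
Definition enc (G : T -> 'M[C]_d) : 'rV[RR]_N :=
  \row_k (let: (x, a, b, s) := (enum_val k : idx) in
          if s then im (G x a b) else re (G x a b)).

Lemma encK G : dec (enc G) = G.
Proof.
apply: funext => x; apply/matrixP => a b; rewrite !mxE /ix !enum_rankK.
by apply eqCri; split.
Qed.

Lemma decD u v : dec (u + v) = (fun x => dec u x + dec v x).
Proof. by apply: funext => x; apply/matrixP => a b; rewrite !mxE. Qed.
Lemma decZ (r : RR) v : dec (r *: v) = (fun x => Complex r 0 *: dec v x).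
Proof.
apply: funext => x; apply/matrixP => a b; rewrite !mxE.
by apply eqCri; rewrite reRC imRC.
Qed.

Definition linC (Phi : (T -> 'M[C]_d) -> C) :=
  (forall G H, Phi (fun x => G x + H x) = Phi G + Phi H) /\
  (forall (r : RR) G, Phi (fun x => Complex r 0 *: G x) = Complex r 0 * Phi G).

Lemma linC_re Phi : linC Phi -> continuous (fun v => re (Phi (dec v))).
Proof.
move=> [hD hZ]; apply: linR_cont; split => [u v|r v].
  by rewrite decD hD reD.
by rewrite decZ hZ reRC.
Qed.
Lemma linC_im Phi : linC Phi -> continuous (fun v => im (Phi (dec v))).
Proof.
move=> [hD hZ]; apply: linR_cont; split => [u v|r v].
  by rewrite decD hD imD.
by rewrite decZ hZ imRC.
Qed.

Definition jobs (G : T -> 'M[C]_d) := (forall x, psd (G x)) /\ \sum_x G x = 1%:M.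
End Enc.

Lemma psd_iff d (M : 'M[C]_d) : psd M <->
  (forall a b, re (M b a) = re (M a b) /\ im (M b a) = - im (M a b)) /\
  (forall w, im (bf w w M) = 0 /\ 0 <= re (bf w w M)).
Proof.
split.
  move=> hM; split.
    move=> a b; have := congr1 (fun X : 'M[C]_d => X a b) (psd_herm hM).
    rewrite !mxE => /eqCri []; rewrite re_conj im_conj => h1 h2.
    by split; [rewrite h1|rewrite -h2 opprK].
  by move=> w; have := psd_ge0 w hM; rewrite ge0C => /andP[/eqP -> ->].
move=> [h1 h2]; split.
  apply/matrixP => a b; rewrite !mxE; apply eqCri.
  by rewrite re_conj im_conj; have [-> ->] := h1 a b; rewrite opprK.
by move=> w; rewrite -/(bf _ _ _) ge0C; have [-> ->] := h2 w; rewrite eqxx.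
Qed.

Section Closed.
Variable N : nat.
Lemma closed_forall (I : Type) (S : I -> set 'rV[RR]_N) :
  (forall i, closed (S i)) -> closed [set v | forall i, S i v].
Proof.
move=> h; rewrite (_ : [set v | forall i, S i v] = \bigcap_(i in setT) S i).
  by apply: closed_bigI => i _; exact: h.
by apply/seteqP; split => v /= H i //; exact: H.
Qed.
Lemma closed_eqf (f g : 'rV[RR]_N -> RR) : continuous f -> continuous g ->
  closed [set v | f v = g v].
Proof.
move=> hf hg.
rewrite (_ : [set v | f v = g v] = (fun v => f v - g v) @^-1` [set x | x = 0]).
  apply: preimage_closed; last exact: closed_eq.
  by move=> x _; apply: continuousB; [exact: hf|exact: hg].
by apply/seteqP; split => v /= H; apply/eqP; [rewrite H subrr|rewrite -subr_eq0; apply/eqP].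
Qed.
Lemma closed_lef (f g : 'rV[RR]_N -> RR) : continuous f -> continuous g ->
  closed [set v | f v <= g v].
Proof.
move=> hf hg.
rewrite (_ : [set v | f v <= g v] = (fun v => g v - f v) @^-1` [set x | 0 <= x]).
  apply: preimage_closed; last exact: closed_ge.
  by move=> x _; apply: continuousB; [exact: hg|exact: hf].
by apply/seteqP; split => v /=; rewrite subr_ge0.
Qed.
End Closed.

Section Compact.
Variables (T : finType) (d : nat).
Local Notation N := #|{: idx T d}|.
Local Notation dec := (@dec T d).

Lemma cont_entry_re (Phi : (T -> 'M[C]_d) -> C) : linC Phi ->
  continuous (fun v => re (Phi (dec v))).
Proof. exact: linC_re. Qed.

Lemma linC_entry x a b : linC (fun G : T -> 'M[C]_d => G x a b).
Proof. by split => [G H|r G]; rewrite mxE. Qed.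
Lemma linC_entryN x a b : linC (fun G : T -> 'M[C]_d => - G x a b).
Proof. by split => [G H|r G]; rewrite mxE ?opprD // mulrN. Qed.
Lemma linC_bf x w : linC (fun G : T -> 'M[C]_d => bf w w (G x)).
Proof. by split => [G H|r G]; rewrite ?bfDm ?bfZm. Qed.
Lemma linC_sum (P : pred T) a b : linC (fun G : T -> 'M[C]_d => (\sum_(x | P x) G x) a b).
Proof.
split => [G H|r G]; first by rewrite big_split mxE.
by rewrite -scaler_sumr mxE.
Qed.

Definition Jset := [set v : 'rV[RR]_N | jobs (dec v)].

Lemma Jset_closed : closed Jset.
Proof.
rewrite (_ : Jset = [set v |
  ((forall x a b, re (dec v x b a) = re (dec v x a b) /\ im (dec v x b a) = im (- dec v x a b)) /\
  (forall x w, im (bf w w (dec v x)) = 0 /\ 0 <= re (bf w w (dec v x)))) /\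
  (forall a b, re ((\sum_x dec v x) a b) = re ((1%:M : 'M[C]_d) a b) /\
               im ((\sum_x dec v x) a b) = im ((1%:M : 'M[C]_d) a b))]).
  apply: closedI; first apply: closedI.
  - apply: closed_forall => x; apply: closed_forall => a; apply: closed_forall => b.
    apply: closedI; apply: closed_eqf.
    + exact: (linC_re (linC_entry x b a)).
    + exact: (linC_re (linC_entry x a b)).
    + exact: (linC_im (linC_entry x b a)).
    + exact: (linC_im (linC_entryN x a b)).
  - apply: closed_forall => x; apply: closed_forall => w.
    apply: closedI; [apply: closed_eqf|apply: closed_lef].
    + exact: (linC_im (linC_bf x w)).
    + exact: cst_continuous.
    + exact: cst_continuous.
    + exact: (linC_re (linC_bf x w)).
  - apply: closed_forall => a; apply: closed_forall => b.
    apply: closedI; apply: closed_eqf; try exact: cst_continuous.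
    + exact: (linC_re (linC_sum predT a b)).
    + exact: (linC_im (linC_sum predT a b)).
apply/seteqP; split => v /=.
  move=> [hp hs]; split; last first.
    by move=> a b; rewrite hs.
  split => [x a b|x w]; have /psd_iff [h1 h2] := hp x; [rewrite imN; exact: h1|exact: h2].
move=> [[h1 h2] h3]; split.
  by move=> x; apply/psd_iff; split => [a b|w]; [rewrite -imN; exact: h1|exact: h2].
by apply/matrixP => a b; apply eqCri; exact: h3.
Qed.

Lemma jobs_box (G : T -> 'M[C]_d) : jobs G -> forall x a b,
  (-1 <= re (G x a b) <= 1) /\ (-1 <= im (G x a b) <= 1).
Proof.
move=> [hp hs] x; apply: psd_box; first exact: hp.
have -> : 1%:M - G x = \sum_(y | y != x) G y.
  by rewrite -hs (bigD1 x) //= addrC addrK.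
by apply: psd_sum => y _; exact: hp.
Qed.

Lemma Jset_compact : compact Jset.
Proof.
apply: (subclosed_compact Jset_closed
  (@rV_compact _ N (fun=> `[(-1 : RR), 1]%classic) (fun=> @segment_compact _ _ _))).
move=> v /= hv k; rewrite /= in_itv /=.
case E: (enum_val k) => [[[x a] b] s].
have -> : k = ix x a b s by rewrite /ix -E enum_valK.
clear E; have [h1 h2] := jobs_box hv x a b.
by case: s; rewrite /dec mxE /re /im /= in h1 h2.
Qed.

Lemma exists_min (f : (T -> 'M[C]_d) -> RR) :
  continuous (fun v => f (dec v)) -> (exists G : T -> 'M[C]_d, jobs G) ->
  exists2 G0 : T -> 'M[C]_d, jobs G0 & forall G, jobs G -> f G0 <= f G.
Proof.
move=> hf [G hG].
have J0 : Jset !=set0 by exists (enc G); rewrite /Jset /= encK.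
have [c cJ hc] := EVT_min_rV J0 Jset_compact (continuous_subspaceT hf).
exists (dec c); first by rewrite inE in cJ.
move=> G' hG'; have := hc (enc G'); rewrite encK; apply.
by rewrite inE /Jset /= encK.
Qed.
End Compact.

Local Close Scope classical_set_scope.

Lemma d_pos d n (m : 'I_n -> nat) (A : forall j : 'I_n, 'I_(m j) -> 'M[C]_d) :
  ~ compatible A -> (0 < d)%N.
Proof.
case: d A => // A h; exfalso; apply: h.
exists (fun _ => 1%:M); split; first by move=> x; exact: psd1.
by split => [|j k]; apply/matrixP => -[].
Qed.

Lemma m_pos d m (B : 'I_m -> 'M[C]_d) : (0 < d)%N -> observable B -> (0 < m)%N.
Proof.
move=> dp [_ h]; case: m B h => // B; rewrite big_ord0 => /matrixP.
move=> /(_ (Ordinal dp) (Ordinal dp)); rewrite !mxE eqxx => /eqP.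
by rewrite eq_sym oner_eq0.
Qed.

Lemma rank_sums_le (F : fieldType) (I : finType) (P : pred I) (q : nat) (B : I -> 'M[F]_q) :
  (\rank (\sum_(i | P i) B i)%MS <= \sum_(i | P i) \rank (B i))%N.
Proof.
elim/big_rec2: _ => [|i x y _ h]; first by rewrite mxrank0.
by apply: leq_trans (mxrank_adds_leqif _ _).1 _; rewrite leq_add2l.
Qed.

Unset Implicit Arguments.
Section Main.
Variables (d n : nat) (m : 'I_n -> nat) (A : forall j : 'I_n, 'I_(m j) -> 'M[C]_d).
Hypothesis hobs : forall j, observable (A j).
Hypothesis hinc : ~ compatible A.
Local Notation T := (outcomes m).

Definition marg (G : T -> 'M[C]_d) j (k : 'I_(m j)) := \sum_(x : T | x j == k) G x.
Definition fobj (G : T -> 'M[C]_d) :=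
  \sum_j \sum_k hs (A j k - marg G j k) (A j k - marg G j k).

Lemma dpos : (0 < d)%N. Proof. exact: d_pos hinc. Qed.
Definition k0 j : 'I_(m j) := Ordinal (m_pos dpos (hobs j)).

Lemma fobj_cont : continuous (fun v => fobj (@dec T d v)).
Proof.
rewrite /fobj /hs; apply: cont_sum => j; apply: cont_sum => k.
apply: cont_sum => a; apply: cont_sum => b.
have hre : continuous (fun v => re ((A j k - marg (@dec T d v) j k) a b)).
  have -> : (fun v => re ((A j k - marg (@dec T d v) j k) a b)) =
     (fun v => re (A j k a b) - re ((\sum_(x : T | x j == k) @dec T d v x) a b)).
    by apply: funext => v; rewrite !mxE reD reN.
  apply: cont_sub; first exact: cont_cst.
  exact: (linC_re (linC_sum (fun x : T => x j == k) a b)).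
have him : continuous (fun v => im ((A j k - marg (@dec T d v) j k) a b)).
  have -> : (fun v => im ((A j k - marg (@dec T d v) j k) a b)) =
     (fun v => im (A j k a b) - im ((\sum_(x : T | x j == k) @dec T d v x) a b)).
    by apply: funext => v; rewrite !mxE imD imN.
  apply: cont_sub; first exact: cont_cst.
  exact: (linC_im (linC_sum (fun x : T => x j == k) a b)).
by apply: cont_add; apply: cont_mul.
Qed.

Lemma jobs_exists : exists G : T -> 'M[C]_d, jobs G.
Proof.
pose x0 : T := finfun k0.
exists (fun x => if x == x0 then 1%:M else 0); split.
  by move=> x; case: (x == x0); [exact: psd1|exact: psd0].
rewrite (bigD1 x0) //= eqxx big1 ?addr0 // => x /negbTE -> //.
Qed.

Lemma sep : exists2 G0 : T -> 'M[C]_d, jobs G0 &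
  forall A' : forall j : 'I_n, 'I_(m j) -> 'M[C]_d, compatible A' ->
    0 < \sum_j \sum_k hs (A j k - marg G0 j k) (A j k - A' j k).
Proof.
have [G0 hG0 hmin] := exists_min fobj_cont jobs_exists.
exists G0 => // A' [G' [hG'p [hG's hG'm]]].
set F := fun j k => A j k - marg G0 j k.
have hge0 j : 0 <= \sum_k hs (F j k) (F j k) by apply: sumr_ge0 => k _; exact: hsn_ge0.
have Fpos : 0 < \sum_j \sum_k hs (F j k) (F j k).
  rewrite lt_def (sumr_ge0 _ (fun j _ => hge0 j)) andbT.
  apply/eqP => h0; apply: hinc; exists G0; split; first exact: hG0.1.
  split; first exact: hG0.2.
  move=> j k; have h1 := @psumr_eq0P _ _ _ _ (fun j _ => hge0 j) h0 j isT.
  have h2 := @psumr_eq0P _ _ _ _ (fun k _ => hsn_ge0 (F j k)) h1 k isT.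
  by have /eqP := hsn_eq0 h2; rewrite /F subr_eq0 => /eqP ->.
have var : forall G, jobs G ->
    \sum_j \sum_k hs (F j k) (marg G j k - marg G0 j k) <= 0.
  move=> G hG.
  set S := \sum_j \sum_k hs (F j k) (marg G j k - marg G0 j k).
  set Q := \sum_j \sum_k hs (marg G j k - marg G0 j k) (marg G j k - marg G0 j k).
  have Q0 : 0 <= Q by apply: sumr_ge0 => j _; apply: sumr_ge0 => k _; exact: hsn_ge0.
  have key : forall t : RR, 0 < t -> t <= 1 -> 2 * S <= t * Q.
    move=> t t0 t1.
    pose Gt := fun x => G0 x + Complex t 0 *: (G x - G0 x).
    have hGt : jobs Gt.
      split.
        move=> x; have -> : Gt x = Complex (1 - t) 0 *: G0 x + Complex t 0 *: G x.
          apply/matrixP => a b; rewrite !mxE; apply eqCri.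
          rewrite !reD !imD !reRC !imRC !reB !imB; split; ring.
        have c1 : 0 <= Complex (1 - t) 0 :> C by rewrite ge0C /re /im /= eqxx /=; lra.
        have c2 : 0 <= Complex t 0 :> C by rewrite ge0C /re /im /= eqxx /=; lra.
        apply: psdD; apply: psdZ => //; [exact: (hG0.1 x)|exact: (hG.1 x)].
      by rewrite /Gt big_split /= -scaler_sumr sumrB hG0.2 hG.2 subrr scaler0 addr0.
    have margGt j k : marg Gt j k = marg G0 j k + Complex t 0 *: (marg G j k - marg G0 j k).
      by rewrite /marg /Gt big_split /= -scaler_sumr sumrB.
    have E : fobj Gt = fobj G0 - 2 * t * S + t ^+ 2 * Q.
      rewrite /fobj /S /Q !mulr_sumr -sumrB -big_split; apply: eq_bigr => j _.
      rewrite !mulr_sumr -sumrB -big_split; apply: eq_bigr => k _ /=.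
      by rewrite margGt opprD addrA hsn_expand.
    have := hmin Gt hGt; rewrite E => h; nra.
  rewrite leNgt; apply/negP => S0.
  have SQ : 0 < S + Q by lra.
  have := key (S / (S + Q)) (divr_gt0 S0 SQ).
  rewrite ler_pdivrMr // mul1r => /(_ ltac:(lra)).
  have : S / (S + Q) * Q <= S.
    by rewrite mulrAC ler_pdivrMr //; nra.
  lra.
have -> : \sum_j \sum_k hs (A j k - marg G0 j k) (A j k - A' j k) =
    \sum_j \sum_k hs (F j k) (F j k) -
    \sum_j \sum_k hs (F j k) (marg G' j k - marg G0 j k).
  rewrite -sumrB; apply: eq_bigr => j _; rewrite -sumrB; apply: eq_bigr => k _.
  rewrite -hsBr; congr hs; rewrite /F /marg hG'm.
  by rewrite opprB addrA subrK.
have := var G' (conj hG'p hG's); lra.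
Qed.

Variable G0 : T -> 'M[C]_d.
Hypothesis hG0 : jobs G0.
Hypothesis hsep : forall A' : forall j : 'I_n, 'I_(m j) -> 'M[C]_d, compatible A' ->
    0 < \sum_j \sum_k hs (A j k - marg G0 j k) (A j k - A' j k).

Definition Fm j (k : 'I_(m j)) := A j k - marg G0 j k.
Definition Zm j (k : 'I_(m j)) :=
  (1%:M - marg G0 j k) + (1%:M - A j (k0 j)) + A j k + marg G0 j (k0 j).
Definition Ym j (k : 'I_(m j)) := 1%:M + Zm j k.
Definition tY j (k : 'I_(m j)) := \tr (Ym j k).
Definition rho0 : 'M[C]_d := (d%:R)^-1 *: 1%:M.
Definition rho j (k : 'I_(m j)) := (tY j k)^-1 *: Ym j k.
Definition S0 (r : 'M[C]_d) := r = rho0 \/ exists j k, k != k0 j /\ r = rho j k.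

Lemma psd_A j k : psd (A j k). Proof. exact: (hobs j).1 k. Qed.
Lemma psd_marg j k : psd (marg G0 j k).
Proof. by apply: psd_sum => x _; exact: hG0.1 x. Qed.
Lemma psd_cmarg j k : psd (1%:M - marg G0 j k).
Proof.
have -> : 1%:M - marg G0 j k = \sum_(x : T | x j != k) G0 x.
  by rewrite -hG0.2 (bigID (fun x : T => x j == k)) /= addrC addrK.
by apply: psd_sum => x _; exact: hG0.1 x.
Qed.
Lemma psd_cA j k : psd (1%:M - A j k).
Proof.
rewrite -(hobs j).2 (bigD1 k) //= addrC addrK.
by apply: psd_sum => x _; exact: psd_A.
Qed.
Lemma Zm_psd j k : psd (Zm j k).
Proof.
apply: psdD; [apply: psdD; [apply: psdD|]|];
  (exact: psd_cmarg || exact: psd_cA || exact: psd_A || exact: psd_marg).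
Qed.
Lemma Ym_psd j k : psd (Ym j k).
Proof. by apply: psdD; [exact: psd1|exact: Zm_psd]. Qed.
Lemma d_neq0 : (d%:R : C) != 0.
Proof. by rewrite pnatr_eq0 -lt0n dpos. Qed.
Lemma tY_gt0 j k : 0 < tY j k.
Proof.
rewrite /tY /Ym mxtraceD mxtrace1; apply: ltr_wpDr.
  by apply: tr_psd_ge0; exact: Zm_psd.
by rewrite ltr0n dpos.
Qed.
Lemma tY_neq0 j k : tY j k != 0.
Proof. by rewrite gt_eqF // tY_gt0. Qed.

Lemma S0_density r : S0 r -> density r.
Proof.
case=> [->|[j [k [_ ->]]]]; split.
- by apply: psdZ; [rewrite invr_ge0 ler0n|exact: psd1].
- by rewrite mxtraceZ mxtrace1 mulVf // d_neq0.
- by apply: psdZ; [rewrite invr_ge0 ltW // tY_gt0|exact: Ym_psd].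
- by rewrite mxtraceZ -/(tY j k) mulVf // tY_neq0.
Qed.

Lemma F_decomp j k : Fm j k = (Ym j k - (1%:M + 1%:M + 1%:M)) + Fm j (k0 j).
Proof. by apply/matrixP => a b; rewrite /Fm /Ym /Zm !mxE; ring. Qed.

Lemma not_S0_compat : ~ S0_compatible S0 A.
Proof.
move=> [A' [hA'o [hA'c htr]]].
have hpos := hsep A' hA'c.
have trA j k : \tr (A' j k) = \tr (A j k).
  have := htr j k rho0 (or_introl erefl).
  by rewrite /rho0 -!scalemxAl !mul1mx !mxtraceZ => /(mulfI (invr_neq0 d_neq0)).
have trYA j k : k != k0 j -> \tr (Ym j k *m A' j k) = \tr (Ym j k *m A j k).
  move=> hk; have := htr j k (rho j k) (or_intror (ex_intro _ j (ex_intro _ k (conj hk erefl)))).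
  by rewrite /rho -!scalemxAl !mxtraceZ => /(mulfI (invr_neq0 (tY_neq0 j k))).
have trFD j k : \tr (Fm j k *m (A j k - A' j k)) = \tr (Fm j (k0 j) *m (A j k - A' j k)).
  case: (eqVneq k (k0 j)) => [->//|hk].
  rewrite {1}F_decomp mulmxDl mxtraceD -[RHS]add0r; congr (_ + _).
  rewrite mulmxBl mulmxBr !linearB /= trYA // subrr add0r.
  by rewrite !mulmxDl !mul1mx !mxtraceD trA subrr.
have sum0 : \sum_j \sum_k \tr (Fm j k *m (A j k - A' j k)) = 0.
  apply: big1 => j _.
  under eq_bigr do rewrite trFD.
  rewrite -raddf_sum -mulmx_sumr.
  have -> : \sum_k (A j k - A' j k) = 0 by rewrite sumrB (hobs j).2 (hA'o j).2 subrr.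
  by rewrite mulmx0 raddf0.
have : \sum_j \sum_k hs (A j k - marg G0 j k) (A j k - A' j k) = 0.
  transitivity (re (\sum_j \sum_k \tr (Fm j k *m (A j k - A' j k)))); last by rewrite sum0.
  rewrite re_sum; apply: eq_bigr => j _; rewrite re_sum; apply: eq_bigr => k _.
  rewrite hs_tr /Fm adj_mxB !psd_herm //; [exact: psd_marg|exact: psd_A].
by move=> h; move: hpos; rewrite h ltxx.
Qed.

Definition Um := (\sum_(j < n) \sum_(k < m j | k != k0 j) <<mxvec (rho j k - rho0)>>)%MS.

Lemma affdim_S0 : affdim S0 (\rank Um).
Proof.
exists rho0; split; first by left.
exists Um; split => //; split.
- move=> v [r [[->|[j [k [hk ->]]]] ->]].
    by rewrite subrr linear0 sub0mx.
  apply: (sumsmx_sup j) => //; apply: (sumsmx_sup k) => //.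
  by rewrite genmxE.
- move=> U' hU'; apply/sumsmx_subP => j _; apply/sumsmx_subP => k hk.
  rewrite genmxE; apply: hU'.
  by exists (rho j k); split => //; right; exists j, k.
Qed.

Lemma rank_Um : (\rank Um <= \sum_(j < n) (m j).-1)%N.
Proof.
apply: leq_trans (rank_sums_le _ _) _; apply: leq_sum => j _.
apply: leq_trans (rank_sums_le _ _) _.
apply: (@leq_trans (\sum_(k < m j | k != k0 j) 1)%N).
  by apply: leq_sum => k _; rewrite genmxE; exact: rank_leq_row.
rewrite (eq_bigl (fun k => k \in predC1 (k0 j))); last by move=> k; rewrite inE.
by rewrite sum1_card cardC1 card_ord.
Qed.

Lemma cand : exists k, chi_candidate A k.+1 /\ (k <= \sum_(j < n) (m j).-1)%N.
Proof.
exists (\rank Um); split; last exact: rank_Um.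
exists S0, (\rank Um); split; first exact: S0_density.
split; first exact: not_S0_compat.
by split; first exact: affdim_S0.
Qed.

End Main.

Local Close Scope ring_scope.

Lemma ex_min_nat (P : nat -> Prop) c0 : P c0 ->
  exists c, P c /\ forall c', P c' -> (c <= c')%N.
Proof.
move=> Pc0.
suff H : forall N c, (c <= N)%N -> P c -> exists c1, P c1 /\ forall c', P c' -> (c1 <= c')%N.
  exact: (H c0 c0 (leqnn c0) Pc0).
elim => [|N IH] c hc Pc.
  by exists c; split => // c' _; move: hc; rewrite leqn0 => /eqP ->.
have [[c' [Pc' lt]]|no] := pselect (exists c', P c' /\ (c' < c)%N).
  by apply: (IH c') => //; lia.
exists c; split => // c' Pc'; rewrite leqNgt; apply/negP => lt; apply: no.
by exists c'.
Qed.

Theorem main_aux (d n : nat) (m : 'I_n -> nat)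
    (A : forall j : 'I_n, 'I_(m j) -> 'M[C]_d) :
  (forall j, observable (A j)) -> ~ compatible A ->
  exists c : nat, is_chi_incomp A c /\ leq (c + n) ((\sum_(j < n) m j) + 1)%N.
Proof.
move=> hobs hinc.
have [G0 hG0 hsep] := sep _ _ _ _ hobs hinc.
have [k [hk kle]] := cand _ _ _ _ hobs hinc G0 hG0 hsep.
have [c [hc cmin]] := ex_min_nat (chi_candidate A) _ hk.
exists c; split; first by split.
have ck := cmin _ hk.
have msum : (\sum_(j < n) (m j).-1 + n = \sum_(j < n) m j)%N.
  have e : (\sum_(j < n) 1 = n)%N by rewrite sum1_card card_ord.
  rewrite -[X in (_ + X)%N]e -big_split /=; apply: eq_bigr => j _.
  by rewrite addn1 prednK //; exact: (m_pos (d_pos hinc) (hobs j)).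
lia.
Qed.

Theorem proposition4p5 (d n : nat) (m : 'I_n -> nat)
    (A : forall j : 'I_n, 'I_(m j) -> 'M[C]_d) :
  (forall j, observable (A j)) -> ~ compatible A ->
  exists c : nat, is_chi_incomp A c /\ leq (c + n) ((\sum_(j < n) m j) + 1)%N.
Proof. exact: main_aux. Qed.
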